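(* There exists $\alpha_0 = \alpha_0(n) > 1$ such that for every $\alpha_n \ge \alpha_0$ the following holds. There exists a set $\mathcal{E}_0 \subseteq \mathcal{E}$ with the property that for every $K \in \mathcal{K}$ there is an $E \in \mathcal{E}_0$ with $$\alpha_n^{-1}K \subseteq E \subseteq \alpha_n K, \qquad (\ast)$$ and such that $\mathcal{E}_0$ can be partitioned into at most $C(n,\alpha_n)$ classes (''colours''), $C(n,\alpha_n)$ a finite number depending only on $n$ and $\alpha_n$, in such a way that every $K \in \mathcal{K}$ satisfies $(\ast)$ for at most one $E \in \mathcal{E}_0$ of any given colour.
   Context: $\mathcal{E}$ denotes the class of centred ellipsoids in $\mathbb{R}^n$, i.e. images $A(\mathbb{B})$ of the closed unit ball $\mathbb{B}$ under invertible linear maps $A$. $\mathcal{K}$ denotes the class of centrally symmetric convex bodies in $\mathbb{R}^n$. *)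

(* Defs.v *)
From HB Require Import structures.
From mathcomp Require Import all_boot all_order all_algebra.
From mathcomp Require Import all_classical all_reals all_analysis.
Set Implicit Arguments. Unset Strict Implicit. Unset Printing Implicit Defensive.
Import Order.TTheory GRing.Theory Num.Theory.
Import numFieldNormedType.Exports.
Local Open Scope classical_set_scope.
Local Open Scope ring_scope.

(* R^n is modelled by row vectors 'rV[R]_n, with the (product) topology
   provided by mathcomp-analysis (matrix_normedtype). *)

Definition sqnorm (R : realType) (n : nat) (x : 'rV[R]_n) : R :=
  \sum_(i < n) x ord0 i ^+ 2.

Definition unit_ball (R : realType) (n : nat) : set 'rV[R]_n :=
  [set x | sqnorm x <= 1].

Definition is_ellipsoid (R : realType) (n : nat) (E : set 'rV[R]_n) : Prop :=
  exists A : 'M[R]_n, A \in unitmx /\ E = [set x *m A | x in @unit_ball R n].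

Definition convex_set (R : realType) (n : nat) (K : set 'rV[R]_n) : Prop :=
  forall x y t, K x -> K y -> 0 <= t -> t <= 1 -> K ((1 - t) *: x + t *: y).

Definition centrally_symmetric (R : realType) (n : nat) (K : set 'rV[R]_n) : Prop :=
  forall x, K x -> K (- x).

Definition is_sym_convex_body (R : realType) (n : nat) (K : set 'rV[R]_n) : Prop :=
  [/\ compact K, convex_set K, (K°) !=set0 & centrally_symmetric K].

Definition dilate (R : realType) (n : nat) (t : R) (K : set 'rV[R]_n) : set 'rV[R]_n :=
  [set t *: x | x in K].

Definition sandwich (R : realType) (n : nat) (alpha : R) (K E : set 'rV[R]_n) : Prop :=
  dilate alpha^-1 K `<=` E /\ E `<=` dilate alpha K.

(* Main.v *)
Require Import Defs.
From HB Require Import structures.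
From mathcomp Require Import all_boot all_order all_algebra.
From mathcomp Require Import all_classical all_reals all_analysis.
From mathcomp Require Import ring lra zify.
Import Order.TTheory GRing.Theory Num.Theory.
Import numFieldNormedType.Exports.
Local Open Scope classical_set_scope.
Local Open Scope ring_scope.
Set Implicit Arguments. Unset Strict Implicit. Unset Printing Implicit Defensive.
Definition goodK (R : realType) n (K : set 'rV[R]_n) :=
  Defs.convex_set K /\ Defs.centrally_symmetric K /\ K 0.

Lemma star_in (R : realType) n (K : set 'rV[R]_n) (l : R) x :
  goodK K -> 0 <= l -> l <= 1 -> K x -> K (l *: x).
Proof.
move=> [cK [sK K0]] l0 l1 Kx.
by have := cK 0 x l K0 Kx l0 l1; rewrite scaler0 add0r.
Qed.

Lemma scale_in (R : realType) n (K : set 'rV[R]_n) (l : R) x :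
  goodK K -> `|l| <= 1 -> K x -> K (l *: x).
Proof.
move=> gK l1 Kx; have [l0|l0] := leP 0 l.
  by apply: star_in => //; rewrite -(ger0_norm l0).
have -> : l *: x = (- l) *: (- x) by rewrite scaleNr scalerN opprK.
apply: star_in => //; first by rewrite oppr_ge0 ltW.
  by rewrite -(ltr0_norm l0).
by case: gK => _ [sK _]; apply: sK.
Qed.

Lemma dilateP (R : realType) n (K : set 'rV[R]_n) s y :
  dilate s K y <-> exists2 x, K x & s *: x = y.
Proof. by []. Qed.

Lemma dil0 (R : realType) n (K : set 'rV[R]_n) s :
  goodK K -> dilate s K 0.
Proof. by move=> [_ [_ K0]]; exists 0 => //; rewrite scaler0. Qed.

Lemma dil_mono (R : realType) n (K : set 'rV[R]_n) (s t : R) y :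
  goodK K -> 0 <= s -> s <= t -> dilate s K y -> dilate t K y.
Proof.
move=> gK s0 st [x Kx <-].
have [t0|t0] := eqVneq t 0.
  have s0' : s = 0 by apply/le_anti; rewrite s0 -t0 st.
  by exists x => //; rewrite s0' t0.
exists ((s / t) *: x); last by rewrite scalerA mulrCA mulfV // mulr1.
apply: star_in => //; first by apply: divr_ge0 => //; apply: le_trans st.
by rewrite ler_pdivrMr ?mul1r // lt_neqAle eq_sym t0 (le_trans s0).
Qed.

Lemma dil_add (R : realType) n (K : set 'rV[R]_n) (s t : R) u v :
  goodK K -> 0 <= s -> 0 <= t -> dilate s K u -> dilate t K v ->
  dilate (s + t) K (u + v).
Proof.
move=> gK s0 t0 [x Kx <-] [y Ky <-].
have [st0|st0] := eqVneq (s + t) 0.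
  have s00 : s = 0 by lra.
  have t00 : t = 0 by lra.
  by exists x => //; rewrite st0 s00 t00 !scale0r addr0.
have stp : 0 < s + t by rewrite lt_neqAle eq_sym st0 addr_ge0.
case: (gK) => cK _.
exists ((1 - t / (s + t)) *: x + (t / (s + t)) *: y).
  apply: cK => //; first by apply: divr_ge0 => //; apply: ltW.
  by rewrite ler_pdivrMr // mul1r lerDr.
rewrite scalerDr !scalerA; congr (_ *: _ + _ *: _); field; by rewrite ?st0.
Qed.

Lemma dil_scale (R : realType) n (K : set 'rV[R]_n) (s : R) u (l : R) :
  goodK K -> 0 <= s -> dilate s K u -> dilate (`|l| * s) K (l *: u).
Proof.
move=> gK s0 [x Kx <-].
exists (Num.sg l *: x).
  by apply: scale_in => //; rewrite normr_sg; case: (_ == _).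
rewrite !scalerA; congr (_ *: _); rewrite [in RHS](numEsg l); ring.
Qed.

Lemma dil_opp (R : realType) n (K : set 'rV[R]_n) s u :
  goodK K -> 0 <= s -> dilate s K u -> dilate s K (- u).
Proof.
move=> gK s0 /(dil_scale (-1) gK s0); rewrite normrN normr1 mul1r.
by rewrite scaleN1r.
Qed.

Lemma dil_comb (R : realType) n (K : set 'rV[R]_n) (T : 'M[R]_n)
  (a : 'rV[R]_n) (b c : R) :
  goodK K -> 0 <= b -> 0 <= c -> (forall j, `|a 0 j| <= b) ->
  (forall j, a 0 j != 0 -> dilate c K (row j T)) ->
  dilate (n%:R * (b * c)) K (a *m T).
Proof.
move=> gK b0 c0 ab aT.
rewrite mulmx_sum_row.
have -> : n%:R * (b * c) = \sum_(j < n) (b * c)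
  by rewrite sumr_const card_ord mulr_natl.
suff [] : 0 <= \sum_(j < n) (b * c) /\
  dilate (\sum_(j < n) (b * c)) K (\sum_(j < n) a 0 j *: row j T) by [].
apply: (big_ind2 (fun s v => 0 <= s /\ dilate s K v)).
- by split => //; apply: dil0.
- move=> s1 v1 s2 v2 [s10 H1] [s20 H2]; split; first exact: addr_ge0.
  exact: dil_add.
- move=> j _; split; first exact: mulr_ge0.
  have [aj0|aj0] := eqVneq (a 0 j) 0.
    by rewrite aj0 scale0r; apply: dil0.
  apply: (dil_mono gK _ _ (dil_scale (a 0 j) gK c0 (aT j aj0))).
    exact: mulr_ge0.
  by apply: ler_wpM2r.
Qed.

Lemma entry_le_norm (R : realType) n (x : 'rV[R]_n) j : `|x 0 j| <= `|x|.
Proof.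
rewrite [leRHS]/Num.norm /= mx_normrE.
by apply/bigmax_geP; right; exists (0, j).
Qed.

Lemma norm_le_entries (R : realType) n (x : 'rV[R]_n) r :
  0 <= r -> (forall j, `|x 0 j| <= r) -> `|x| <= r.
Proof.
move=> r0 xr; rewrite [leLHS]/Num.norm /= mx_normrE.
apply/bigmax_leP; split => // -[i j] _ /=.
by rewrite (ord1 i); apply: xr.
Qed.

Lemma body_props (R : realType) n (K : set 'rV[R]_n) :
  is_sym_convex_body K ->
  [/\ goodK K,
      exists M : R, forall x : 'rV[R]_n, K x -> forall j, `|x 0 j| <= M &
      exists2 r : R, 0 < r & forall x : 'rV[R]_n, (forall j, `|x 0 j| <= r) -> K x].
Proof.
move=> [cpK cvK [p Kp] sK].
have [e e0 eK] : exists2 e : R, 0 < e & forall y, `|p - y| < e -> K y.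
  move: Kp; rewrite /interior => /nbhs_ballP [e e0 eK].
  by exists e => // y ey; apply: eK; rewrite -ball_normE.
have Hr : forall x : 'rV[R]_n, (forall j, `|x 0 j| <= e / 2) -> K x.
  move=> x xr.
  have nx : `|x| < e.
    apply: (le_lt_trans (norm_le_entries _ xr)); first by apply: divr_ge0 => //; apply: ltW.
    by rewrite ltr_pdivrMr // ltr_pMr //; lra.
  have K1 : K (p + x) by apply: eK; rewrite opprD addrA subrr add0r normrN.
  have K2 : K (x - p).
    rewrite -[x - p]opprK opprB; apply: sK; apply: eK.
    by rewrite opprB addrC subrK.
  have := cvK _ _ (1/2) K1 K2; rewrite !(divr_ge0, ler_pdivrMr) //.
  have -> : (1 - 1 / 2) *: (p + x) + (1 / 2) *: (x - p) = x :> 'rV[R]_n.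
    by apply/rowP => j; rewrite !mxE; field.
  by apply; rewrite // mul1r ler1n.
split => //.
- split => //; split => //; apply: Hr => j; rewrite mxE normr0.
  by apply: divr_ge0 => //; apply: ltW.
- have [M _ HM] := pinfty_ex_gt0 (compact_bounded cpK).
  exists M => x Kx j; apply: le_trans (HM x Kx); exact: entry_le_norm.
- by exists (e / 2) => //; apply: divr_gt0.
Qed.

Lemma greedy (R : realType) n (K : set 'rV[R]_n) (M r : R) :
  goodK K -> (forall x : 'rV[R]_n, K x -> forall j, `|x 0 j| <= M) -> 0 < r ->
  (forall x : 'rV[R]_n, (forall j, `|x 0 j| <= r) -> K x) ->
  forall i : 'I_n, exists (v : 'rV[R]_n) (k : int),
    [/\ K v, (forall j : 'I_n, (i < j)%N -> v 0 j = 0), v 0 i = expR k%:~R &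
      forall y : 'rV[R]_n, K y -> (forall j : 'I_n, (i < j)%N -> y 0 j = 0) ->
        `|y 0 i| <= 2 * expR 1 * expR k%:~R].
Proof.
move=> gK HM r0 Hr i.
pose L := [set y : 'rV[R]_n | K y /\ forall j : 'I_n, (i < j)%N -> y 0 j = 0].
pose S := [set `|y 0 i| | y in L].
have hS : has_sup S.
  split; first by exists `|(0 : 'rV[R]_n) 0 i|; exists 0 => //; split;
    [case: gK => _ [] | move=> j _; rewrite mxE].
  by exists M => _ [y [Ky _] <-]; apply: HM.
have rS : S r.
  exists (\row_j (if j == i then r else 0)).
    split; first by apply: Hr => j; rewrite mxE; case: eqP => _;
      rewrite ?normr0 ?gtr0_norm // ltW.
    by move=> j ij; rewrite mxE; case: eqP => // ji; rewrite ji ltnn in ij.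
  by rewrite mxE eqxx gtr0_norm.
have mr : r <= sup S := sup_upper_bound hS rS.
have m2 : 0 < sup S / 2 by apply: divr_gt0 => //; apply: lt_le_trans mr.
have [_ [x [Kx xs] <-] wm] := sup_adherent m2 hS.
have [x' [Kx' x's x'i]] : exists x' : 'rV[R]_n,
    [/\ K x', forall j : 'I_n, (i < j)%N -> x' 0 j = 0 & x' 0 i = `|x 0 i|].
  have [xi0|xi0] := ltP (x 0 i) 0.
    exists (- x); split.
    - by case: gK => _ [sK _]; apply: sK.
    - by move=> j ij; rewrite mxE xs // oppr0.
    - by rewrite mxE ltr0_norm.
  by exists x; split => //; rewrite ger0_norm.
set X := `|x 0 i| in wm x'i.
have X0 : 0 < X by move: wm m2 mr r0; lra.
pose k := Num.floor (ln X).
have dX : expR k%:~R <= X.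
  by rewrite -[leRHS](lnK X0) ler_expR /k floor_le.
have Xd : X < expR 1 * expR k%:~R.
  rewrite -expRD -[ltLHS](lnK X0) ltr_expR addrC -[1]/((1:int)%:~R) -intrD.
  exact: floorD1_gt.
have d0 : 0 < expR (k%:~R) := expR_gt0 _.
exists ((expR k%:~R / X) *: x'), k; split.
- apply: star_in => //; first by apply: divr_ge0; apply: ltW.
  by rewrite ler_pdivrMr // mul1r.
- by move=> j ij; rewrite mxE x's // mulr0.
- by rewrite mxE x'i mulfVK // gt_eqF.
- move=> y Ky ys.
  have : `|y 0 i| <= sup S.
    by apply: (sup_upper_bound hS); exists y.
  move: wm Xd; lra.
Qed.

Lemma tri_rep (R : realType) n (T : 'M[R]_n) (q : nat) : (q <= n)%N ->
  (forall i : 'I_n, (i < q)%N ->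
     (forall j : 'I_n, (i < j)%N -> T i j = 0) /\ T i i != 0) ->
  forall y : 'rV[R]_n, (forall j : 'I_n, (q <= j)%N -> y 0 j = 0) ->
  exists c : 'rV[R]_n, (forall j : 'I_n, (q <= j)%N -> c 0 j = 0) /\ y = c *m T.
Proof.
elim: q => [|q IH] qn HT y ys.
  exists 0; split; first by move=> j _; rewrite mxE.
  by rewrite mul0mx; apply/rowP => j; rewrite !mxE ys.
pose Q := Ordinal qn.
have [TQ0 TQQ] := HT Q (ltnSn q).
pose c0 := y 0 Q / T Q Q.
have Hy' : forall j : 'I_n, (q <= j)%N -> (y - c0 *: row Q T) 0 j = 0.
  move=> j qj; rewrite !mxE.
  have [jQ|jQ] := eqVneq j Q.
    by rewrite jQ /c0 mulfVK // subrr.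
  have jq : (j : nat) != q by apply: contra_neq jQ => jq; apply/val_inj.
  have qj' : (q < j)%N by lia.
  by rewrite ys // TQ0 // mulr0 subr0.
have [c' [c's c'E]] := IH (ltnW qn) (fun i iq => HT i (ltnW iq))
  (y - c0 *: row Q T) Hy'.
  exists (c' + c0 *: delta_mx 0 Q); split.
    move=> j qj; rewrite !mxE c's ?(ltnW qj) //.
    have -> : (j == Q) = false by apply/eqP => jQ; rewrite jQ /= ltnn in qj.
    by rewrite andbF mulr0 addr0.
  by rewrite mulmxDl -scalemxAl -rowE -c'E subrK.
Qed.

Lemma dil1 (R : realType) n (K : set 'rV[R]_n) x : K x -> dilate 1 K x.
Proof. by move=> Kx; exists x => //; rewrite scale1r. Qed.

Lemma construct (R : realType) n (K : set 'rV[R]_n) (v : 'I_n -> 'rV[R]_n)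
  (d : 'I_n -> R) :
  goodK K -> (forall i, K (v i)) ->
  (forall i j : 'I_n, (i < j)%N -> v i 0 j = 0) ->
  (forall i, v i 0 i = d i) -> (forall i, 0 < d i) ->
  forall p, (p <= n)%N -> exists (T : 'M[R]_n) (z : 'I_n -> 'I_n -> int),
   (forall i, z i i = 1) /\
   forall i : 'I_n, (i < p)%N ->
     (forall j, T i j = (if (j <= i)%N then (z i j)%:~R else 0) * d j) /\
     dilate ((n.+1)%:R ^+ p) K (row i T).
Proof.
move=> gK Kv vs vd d0; elim => [|p IH] pn.
  by exists 0, (fun i j => if i == j then 1 else 0); split => // i; rewrite eqxx.
have [T [z [zd HT]]] := IH (ltnW pn).
pose P := Ordinal pn.
have Ttri : forall i : 'I_n, (i < p)%N ->
    (forall j : 'I_n, (i < j)%N -> T i j = 0) /\ T i i != 0.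
  move=> i ip; have [Ti _] := HT i ip; split.
    by move=> j ij; rewrite Ti leqNgt ij mul0r.
  by rewrite Ti leqnn zd mul1r gt_eqF.
pose w := v P - d P *: delta_mx 0 P.
have ws : forall j : 'I_n, (p <= j)%N -> w 0 j = 0.
  move=> j pj; rewrite !mxE.
  have [jP|jP] := eqVneq j P.
    by rewrite jP vd !eqxx mulr1 subrr.
  have jp : (j : nat) != p by apply: contra_neq jP => jp; apply/val_inj.
  rewrite vs /=; last by lia.
  by rewrite mulr0 subrr.
have [c [cs wE]] := tri_rep (ltnW pn) Ttri ws.
pose fl : 'rV[R]_n := \row_j ((Num.floor (c 0 j))%:~R).
have fls : forall j : 'I_n, (p <= j)%N -> fl 0 j = 0.
  by move=> j pj; rewrite mxE cs // Num.Theory.floor0.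
pose r := d P *: delta_mx 0 P + fl *m T.
pose T' := \matrix_(i, j) if i == P then r 0 j else T i j.
pose z' := fun i j : 'I_n => if i == P then
   (if j == P then 1 else \sum_l Num.floor (c 0 l) * (if (j <= l)%N then z l j else 0))
   else z i j.
have cp1 : 1 <= (n.+1)%:R ^+ p :> R by rewrite exprn_ege1 // ler1n.
have cpS : (n.+1)%:R ^+ p <= (n.+1)%:R ^+ p.+1 :> R.
  by rewrite exprS ler_peMl ?ler1n // (le_trans ler01 cp1).
exists T', z'; split.
  by move=> i; rewrite /z'; case: eqP => // ->; rewrite eqxx.
move=> i; rewrite ltnS leq_eqVlt => /orP [/eqP iP|ip]; last first.
  have iP : (i == P) = false by apply/eqP => iP; rewrite iP ltnn in ip.
  have [Ti Hi] := HT i ip; split.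
    by move=> j; rewrite /T' /z' mxE iP Ti.
  have -> : row i T' = row i T by apply/rowP => j; rewrite !mxE iP.
  exact: dil_mono gK (le_trans ler01 cp1) cpS Hi.
have iPe : i = P by apply/val_inj.
rewrite iPe; split.
  move=> j; rewrite /T' /z' mxE !eqxx /r !mxE.
  pose X := fun l : 'I_n => Num.floor (c 0 l) * (if (j <= l)%N then z l j else 0).
  have EX : forall l, fl 0 l * T l j = (X l)%:~R * d j.
    move=> l; have [lp|pl] := ltnP l p.
      have [Tl _] := HT l lp.
      rewrite Tl mxE /X intrM; case: ifP => _; last by rewrite mul0r mulr0 mul0r.
      by rewrite mulrA.
    by rewrite fls // /X cs // Num.Theory.floor0 !mul0r.
  have X0 : forall l, (p <= j)%N -> X l = 0.
    move=> l pj; rewrite /X; have [lp|pl] := ltnP l p.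
      by rewrite leqNgt (leq_trans lp pj) mulr0.
    by rewrite cs // Num.Theory.floor0 mul0r.
  rewrite (eq_bigr _ (fun l _ => EX l)) -mulr_suml -rmorph_sum /=.
  have [jP|jP] := eqVneq j P.
    rewrite jP leqnn mulr1 big1 ?mul0r ?addr0 ?mul1r // => l _.
    by rewrite X0 // jP.
  have [jp|pj] := ltnP j p.
    by rewrite mulr0 add0r ltnW.
  rewrite mulr0 add0r big1 ?mul0r; last by move=> l _; rewrite X0.
  have jp : (j : nat) != p by apply: contra_neq jP => jp; apply/val_inj.
  by case: ifP => _; rewrite ?mulr0z mul0r.
have -> : row P T' = v P - (c - fl) *m T.
  have -> : row P T' = r by apply/rowP => j; rewrite !mxE eqxx.
  rewrite /r mulmxBl -wE /w.
  by rewrite opprB opprB addrCA [v P + _]addrCA subrr addr0 addrC.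
have cp0 : 0 <= (n.+1)%:R ^+ p :> R := le_trans ler01 cp1.
have Hc : dilate (n%:R * (1 * (n.+1)%:R ^+ p)) K ((c - fl) *m T).
  apply: dil_comb => //.
    move=> j; rewrite !mxE; have := Num.Theory.floor_le (c 0 j);
    have := Num.Theory.floorD1_gt (c 0 j); rewrite intrD; 
    set u := (Num.floor (c 0 j))%:~R; move=> h1 h2.
    by rewrite ger0_norm; lra.
  move=> j; rewrite !mxE; have [jp|pj] := ltnP j p.
    by move=> _; have [_ H] := HT j jp.
  by rewrite cs // Num.Theory.floor0 subrr eqxx.
have e0 : 0 <= n%:R * (1 * (n.+1)%:R ^+ p) :> R by rewrite mul1r mulr_ge0.
have H := dil_add gK ler01 e0 (dil1 (Kv P)) (dil_opp gK e0 Hc).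
apply: (dil_mono gK (addr_ge0 ler01 e0) _ H).
rewrite exprS mul1r -natr1 mulrDl mul1r addrC lerD2l // natr1; exact: cp1.
Qed.

Fixpoint Aq (R : realType) (G c : R) (q : nat) : R :=
  match q with 0 => 0 | q'.+1 => (1 + G * c) * Aq G c q' + G end.

Lemma Aq_ge0 (R : realType) (G c : R) q : 0 <= G -> 0 <= c -> 0 <= Aq G c q.
Proof.
move=> G0 c0; elim: q => //= q IH.
by apply: addr_ge0 => //; apply: mulr_ge0 => //; apply: addr_ge0 => //; apply: mulr_ge0.
Qed.

Lemma bound_rep (R : realType) n (K : set 'rV[R]_n) (T : 'M[R]_n) (d : 'I_n -> R)
  (G c : R) :
  goodK K -> 0 <= G -> 0 <= c -> (forall i, 0 < d i) ->
  (forall i j : 'I_n, (i < j)%N -> T i j = 0) -> (forall i, T i i = d i) ->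
  (forall i, dilate c K (row i T)) ->
  (forall (i : 'I_n) (y : 'rV[R]_n), K y -> (forall j : 'I_n, (i < j)%N -> y 0 j = 0) ->
     `|y 0 i| <= G * d i) ->
  forall q, (q <= n)%N -> forall (s : R) (y : 'rV[R]_n), 0 <= s -> dilate s K y ->
  (forall j : 'I_n, (q <= j)%N -> y 0 j = 0) ->
  exists a : 'rV[R]_n, y = a *m T /\ forall j, `|a 0 j| <= s * Aq G c q.
Proof.
move=> gK G0 c0 d0 Ttri Td Tc Hg; elim => [|q IH] qn s y s0 Hy ys.
  exists 0; split; last by move=> j; rewrite mxE normr0 mulr0.
  by rewrite mul0mx; apply/rowP => j; rewrite !mxE ys.
have [s00|sp] := eqVneq s 0.
  exists 0; split; last by move=> j; rewrite mxE normr0 s00 mul0r.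
  by case: Hy => x _ <-; rewrite s00 scale0r mul0mx.
have [x Kx yx] := Hy.
pose Q := Ordinal qn.
have xs : forall j : 'I_n, (Q < j)%N -> x 0 j = 0.
  move=> j Qj; have := ys j Qj; rewrite -yx mxE => /eqP.
  by rewrite mulf_eq0 (negbTE sp) /= => /eqP.
have yQ : `|y 0 Q| <= s * (G * d Q).
  by rewrite -yx mxE normrM ger0_norm // ler_wpM2l // Hg.
pose a0 := y 0 Q / d Q.
have a0b : `|a0| <= s * G.
  rewrite normrM normfV (gtr0_norm (d0 Q)) ler_pdivrMr //.
  by rewrite -mulrA.
have sG0 : 0 <= s * G by apply: mulr_ge0.
have Hy' : dilate (s * (1 + G * c)) K (y - a0 *: row Q T).
  have H2 := dil_opp gK (mulr_ge0 (normr_ge0 a0) c0) (dil_scale a0 gK c0 (Tc Q)).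
  have H2' : dilate (s * G * c) K (- (a0 *: row Q T)).
    apply: dil_mono gK _ _ H2; first by apply: mulr_ge0.
    by apply: ler_wpM2r.
  have := dil_add gK s0 (mulr_ge0 sG0 c0) Hy H2'.
  by rewrite mulrDr mulr1 mulrA.
have ys' : forall j : 'I_n, (q <= j)%N -> (y - a0 *: row Q T) 0 j = 0.
  move=> j qj; rewrite !mxE.
  have [jQ|jQ] := eqVneq j Q.
    by rewrite jQ Td /a0 mulfVK ?subrr // gt_eqF.
  have jq : (j : nat) != q by apply: contra_neq jQ => jq; apply/val_inj.
  by rewrite ys ?Ttri /=; try lia; rewrite mulr0 subr0.
have s1 : 0 <= s * (1 + G * c) by apply: mulr_ge0 => //; apply: addr_ge0 => //; apply: mulr_ge0.
have [a' [a'E a'b]] := IH (ltnW qn) _ _ s1 Hy' ys'.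
exists (a' + a0 *: delta_mx 0 Q); split.
  by rewrite mulmxDl -scalemxAl -rowE -a'E subrK.
move=> j; rewrite !mxE /=.
apply: le_trans (ler_normD _ _) _.
rewrite mulrDr; apply: lerD.
  by apply: le_trans (a'b j) _; rewrite mulrA.
rewrite normrM; case: (j == Q); rewrite ?normr1 ?normr0 ?mulr1 ?mulr0 //.
Qed.

Definition netmx (R : realType) n (T : 'M[R]_n) (k : 'I_n -> int)
  (z : 'I_n -> 'I_n -> int) :=
  (forall i, z i i = 1) /\
  forall i j, T i j = (if (j <= i)%N then (z i j)%:~R else 0) * expR (k j)%:~R.

Lemma net_tri (R : realType) n (T : 'M[R]_n) k z : netmx T k z ->
  (forall i j : 'I_n, (i < j)%N -> T i j = 0) /\
  (forall i, T i i = expR (k i)%:~R).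
Proof.
move=> [zd HT]; split.
  by move=> i j ij; rewrite HT leqNgt ij mul0r.
by move=> i; rewrite HT leqnn zd mul1r.
Qed.

Lemma net_unit (R : realType) n (T : 'M[R]_n) k z : netmx T k z ->
  T \in unitmx.
Proof.
move=> /net_tri [Tt Td].
rewrite unitmxE det_trig; last by apply/is_trig_mxP.
rewrite unitfE; apply/prodf_neq0 => i _; rewrite Td.
by rewrite gt_eqF // expR_gt0.
Qed.

Lemma inv_tri (R : realType) n (T : 'M[R]_n) k z : netmx T k z ->
  (forall i j : 'I_n, (i < j)%N -> invmx T i j = 0) /\
  (forall i, invmx T i i * T i i = 1).
Proof.
move=> hT; have [Tt Td] := net_tri hT; have Tu := net_unit hT.
have H : forall j : 'I_n, exists c : 'rV[R]_n,
    (forall l : 'I_n, (j < l)%N -> c 0 l = 0) /\ row j (invmx T) = c /\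
    (c *m T) 0 j = 1.
  move=> j.
  have := @tri_rep R n T j.+1 (ltn_ord j) _ (delta_mx 0 j) _.
  case.
  - move=> i ij; split; first exact: Tt.
    by rewrite Td gt_eqF // expR_gt0.
  - move=> l jl; rewrite mxE andbC; case: eqP => // lj.
    by move: jl; rewrite lj ltnn.
  move=> c [cs cE]; exists c; split => //; split.
    by rewrite rowE cE -mulmxA mulmxV // mulmx1.
  by rewrite -cE mxE !eqxx.
split.
  move=> i j ij; have [c [cs [cr _]]] := H i.
  have := congr1 (fun M : 'rV[R]_n => M 0 j) cr; rewrite /= mxE cs // => ->.
move=> i; have [c [cs [cr c1]]] := H i.
have -> : invmx T i i = c 0 i by rewrite -cr mxE.
rewrite -c1 mxE (bigD1 i) //= big1 ?addr0 // => l li.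
have [il|li'] := ltnP i l; first by rewrite cs // mul0r.
rewrite Tt ?mulr0 //; rewrite ltn_neqAle li' andbT.
by apply: contra_neq li => h; apply/val_inj.
Qed.

Lemma small_mult (R : realType) (x : int) (m : nat) (b : R) :
  (m%:Z %| x)%Z -> `|x%:~R : R| <= b -> b < m%:R -> x = 0.
Proof.
move=> /dvdzP [q ->] xb bm; apply/eqP; rewrite mulf_eq0; apply/orP; left.
apply/negPn/negP => q0.
have : (m%:R : R) <= `|(q * m%:Z)%:~R : R|.
  rewrite intrM normrM -intr_norm.
  have q1 : 1 <= `|q|%:~R :> R.
    by rewrite -[1]/((1:int)%:~R) ler_int; lia.
  have mE : ((m%:Z)%:~R : R) = m%:R by rewrite pmulrn.
  rewrite mE ger0_norm ?ler0n //.
  have m0 : (0 : R) <= m%:R by rewrite ler0n.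
  nra.
by move: xb bm; lra.
Qed.

Lemma diagC (R : realType) n (TA TB : 'M[R]_n) ka za kb zb :
  netmx TA ka za -> netmx TB kb zb -> forall i,
  (TA *m invmx TB) i i = TA i i * invmx TB i i.
Proof.
move=> hA hB i; have [At _] := net_tri hA; have [Wt _] := inv_tri hB.
rewrite mxE (bigD1 i) //= big1 ?addr0 // => l li.
have [il|li'] := ltnP i l; first by rewrite At // mul0r.
rewrite Wt ?mulr0 //; rewrite ltn_neqAle li' andbT.
by apply: contra_neq li => h; apply/val_inj.
Qed.

Lemma net_sep (R : realType) n (T1 T2 C1 C2 : 'M[R]_n) k1 k2 z1 z2
  (b : R) (m : nat) :
  netmx T1 k1 z1 -> netmx T2 k2 z2 -> b < m%:R ->
  (forall i, (m%:Z %| k1 i - k2 i)%Z) ->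
  (forall i j, (m%:Z %| z1 i j - z2 i j)%Z) ->
  T1 = C1 *m T2 -> T2 = C2 *m T1 ->
  (forall i j, `|C1 i j| <= b) -> (forall i j, `|C2 i j| <= b) -> T1 = T2.
Proof.
move=> h1 h2 bm mk mz e1 e2 b1 b2.
have [T1t T1d] := net_tri h1; have [T2t T2d] := net_tri h2.
have [W1t W1d] := inv_tri h1; have [W2t W2d] := inv_tri h2.
have C1E : C1 = T1 *m invmx T2 by rewrite e1 mulmxK // (net_unit h2).
have C2E : C2 = T2 *m invmx T1 by rewrite e2 mulmxK // (net_unit h1).
have Winv : forall (T : 'M[R]_n) i, invmx T i i * T i i = 1 -> invmx T i i = (T i i)^-1.
  by move=> T i h; rewrite -[LHS]mulr1 -(mulfV (x:=T i i)) ?mulrA ?h ?mul1r //;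
     apply/eqP => h0; move: h; rewrite h0 mulr0 => /eqP; rewrite eq_sym oner_eq0.
have kE : forall i, k1 i = k2 i.
  move=> i; apply/eqP; rewrite -subr_eq0; apply/eqP.
  apply: (small_mult (mk i) _ bm).
  have c1 := b1 i i; have c2 := b2 i i.
  rewrite C1E (diagC h1 h2) (Winv _ _ (W2d i)) T1d T2d -expRB -intrB in c1.
  rewrite C2E (diagC h2 h1) (Winv _ _ (W1d i)) T1d T2d -expRB -intrB in c2.
  rewrite ger0_norm ?expR_ge0 // in c1.
  rewrite ger0_norm ?expR_ge0 // in c2.
  rewrite intrB in c1; rewrite intrB in c2; rewrite intrB.
  set u := (k1 i)%:~R in c1 c2 *; set v := (k2 i)%:~R in c1 c2 *.
  have e3 := expR_ge1Dx (u - v); have e4 := expR_ge1Dx (v - u).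
  rewrite ler_norml; apply/andP; split; lra.
have lev : forall s, forall i j : 'I_n, (i - j < s)%N -> T1 i j = T2 i j.
  elim => [|s IH] i j //.
  rewrite ltnS leq_eqVlt => /orP [/eqP ijs|]; last exact: IH.
  case: s IH ijs => [|s] IH ijs.
    have [ij|ji] := ltnP i j; first by rewrite T1t ?T2t.
    have -> : j = i by apply: ord_inj; lia.
    by rewrite T1d T2d kE.
  have ji : (j < i)%N by lia.
  have cij : C1 i j = (T1 i j - T2 i j) * invmx T2 j j.
    have h0 : (T2 *m invmx T2) i j = 0.
      rewrite mulmxV ?(net_unit h2) // mxE.
      by case: eqP => // ijE; move: ji; rewrite ijE ltnn.
    rewrite C1E -[LHS]subr0 -h0 !mxE -sumrB (bigD1 j) //= big1 ?addr0 ?mulrBl //.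
    move=> p pj; rewrite -mulrBl.
    have [pj'|jp] := ltnP p j; first by rewrite W2t ?mulr0.
    have [ip|pi] := ltnP i p; first by rewrite T1t ?T2t ?subrr ?mul0r.
    have jp' : (j < p)%N by rewrite ltn_neqAle jp andbT; apply: contra_neq pj => h; apply/val_inj.
    by rewrite IH ?subrr ?mul0r //; lia.
  have [_ HT1] := h1; have [_ HT2] := h2.
  move: (b1 i j); rewrite cij HT1 HT2 (Winv _ _ (W2d j)) T2d.
  have -> : (j <= i)%N by apply: ltnW.
  rewrite kE -mulrBl -mulrA mulfV ?gt_eqF ?expR_gt0 // mulr1 -intrB => bij.
  have := small_mult (mz i j) bij bm; move/eqP; rewrite subr_eq0 => /eqP zE.
  by rewrite zE.
by apply/matrixP => i j; apply: (lev n); have := ltn_ord i; lia.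
Qed.

Lemma sq_le1 (R : realType) n (x : 'rV[R]_n) :
  Defs.sqnorm x <= 1 -> forall j, `|x 0 j| <= 1.
Proof.
move=> h j.
have : x 0 j ^+ 2 <= 1.
  apply: le_trans h; rewrite /Defs.sqnorm (bigD1 j) //= lerDl.
  by apply: sumr_ge0 => i _; apply: sqr_ge0.
rewrite -real_normK ?num_real //.
set u := `|x 0 j|; have u0 : 0 <= u by apply: normr_ge0.
move=> h2; nra.
Qed.

Lemma sq_delta (R : realType) n (i : 'I_n) :
  Defs.sqnorm (delta_mx 0 i : 'rV[R]_n) = 1.
Proof.
rewrite /Defs.sqnorm (bigD1 i) //= big1 ?addr0.
  by rewrite mxE !eqxx expr1n.
by move=> j ji; rewrite mxE eqxx (negbTE ji) expr0n.
Qed.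

Lemma sq_bound (R : realType) n (x : 'rV[R]_n) (t : R) :
  (0 < n)%N -> 0 <= t -> n%:R * t <= 1 -> (forall j, `|x 0 j| <= t) ->
  Defs.sqnorm x <= 1.
Proof.
move=> n0 t0 nt h.
apply: (@le_trans _ _ (\sum_(j < n) t ^+ 2)).
  apply: ler_sum => j _; rewrite -real_normK ?num_real //.
  have := h j; set u := `|x 0 j|; have : 0 <= u by apply: normr_ge0.
  move=> u0 ut; nra.
rewrite sumr_const card_ord -mulr_natl.
have n1 : (1 : R) <= n%:R by rewrite ler1n.
nra.
Qed.

Definition ellB (R : realType) n (T : 'M[R]_n) : set 'rV[R]_n :=
  [set x *m T | x in @Defs.unit_ball R n].

Lemma sand_C (R : realType) n (K : set 'rV[R]_n) (T1 T2 : 'M[R]_n) (a : R) :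
  0 < a -> Defs.sandwich a K (ellB T1) -> Defs.sandwich a K (ellB T2) ->
  exists C : 'M[R]_n, T1 = C *m T2 /\ forall i j, `|C i j| <= a * a.
Proof.
move=> a0 [_ s1] [s2 _].
have H : forall i : 'I_n, exists b : 'rV[R]_n,
    Defs.sqnorm b <= 1 /\ row i T1 = ((a * a) *: b) *m T2.
  move=> i.
  have : ellB T1 (row i T1).
    by exists (delta_mx 0 i); rewrite ?rowE //; rewrite /Defs.unit_ball /= sq_delta.
  move=> /s1 [x Kx xE].
  have : Defs.dilate a^-1 K (a^-1 *: x) by exists x.
  move=> /s2 [b bu bE]; exists b; split => //.
  by rewrite -xE -scalemxAl bE scalerA -mulrA mulfV ?gt_eqF // mulr1.
have [f hf] := choice H.
exists (\matrix_i ((a * a) *: f i)); split.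
  by apply/row_matrixP => i; rewrite row_mul rowK; case: (hf i).
move=> i j; rewrite !mxE normrM.
have aa : 0 <= a * a by apply: mulr_ge0; apply: ltW.
rewrite (ger0_norm aa) -[leRHS]mulr1 ler_wpM2l //.
by apply: sq_le1; case: (hf i).
Qed.

Lemma res_dvd (x y : int) (M : nat) :
  (inord (absz (x %% M.+1)%Z) : 'I_M.+1) = inord (absz (y %% M.+1)%Z) ->
  ((M.+1)%:Z %| x - y)%Z.
Proof.
move=> h.
have m0 : (M.+1)%:Z != 0 by [].
have bnd : forall u : int, (absz (u %% M.+1)%Z < M.+1)%N.
  move=> u; have := modz_ge0 u m0; have := ltz_pmod u (isT : (0 < (M.+1)%:Z)).
  lia.
have := congr1 val h; rewrite /= !inordK // => e.
rewrite -eqz_mod_dvd; apply/eqP.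
by rewrite -(gez0_abs (modz_ge0 x m0)) -[RHS](gez0_abs (modz_ge0 y m0)) e.
Qed.

Definition repT (R : realType) n (E : set 'rV[R]_n) :
    'M[R]_n * ('I_n -> int) * ('I_n -> 'I_n -> int) :=
  match pselect (exists p : 'M[R]_n * ('I_n -> int) * ('I_n -> 'I_n -> int),
                   netmx p.1.1 p.1.2 p.2 /\ E = ellB p.1.1) with
  | left h => projT1 (cid h)
  | right _ => (0, fun _ => 0, fun _ _ => 0)
  end.

Lemma repTP (R : realType) n (E : set 'rV[R]_n) :
  (exists T k z, netmx T k z /\ E = ellB T) ->
  netmx (repT E).1.1 (repT E).1.2 (repT E).2 /\ E = ellB (repT E).1.1.
Proof.
move=> [T [k [z h]]]; rewrite /repT; case: pselect => [h'|nh].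
  by case: (cid h').
by exfalso; apply: nh; exists (T, k, z).
Qed.

Definition cdata (R : realType) n (M : nat) (E : set 'rV[R]_n) :
    {ffun 'I_n -> 'I_M.+1} * {ffun 'I_n * 'I_n -> 'I_M.+1} :=
  ([ffun i => inord (absz ((repT E).1.2 i %% M.+1)%Z)],
   [ffun ij => inord (absz ((repT E).2 ij.1 ij.2 %% M.+1)%Z)]).

Unset Implicit Arguments.

Theorem lemma7p1 (R : realType) (n : nat) (hn : (0 < n)%N) :
  exists alpha0 : R, 1 < alpha0 /\
  forall alpha : R, alpha0 <= alpha ->
  exists (E0 : set (set 'rV[R]_n)) (C : nat) (colour : set 'rV[R]_n -> 'I_C),
    E0 `<=` is_ellipsoid (n:=n) /\
    (forall K, is_sym_convex_body K -> exists2 E, E0 E & sandwich alpha K E) /\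
    (forall K E1 E2, is_sym_convex_body K -> E0 E1 -> E0 E2 ->
       colour E1 = colour E2 -> sandwich alpha K E1 -> sandwich alpha K E2 ->
       E1 = E2).
Proof.
pose c : R := (n.+1)%:R ^+ n.
pose G : R := 2 * expR 1.
pose A := Aq G c n.
have c0 : 0 <= c by rewrite /c exprn_ge0 // ler0n.
have G0 : 0 <= G by rewrite /G mulr_ge0 // expR_ge0.
have A0 : 0 <= A := Aq_ge0 n G0 c0.
have nc0 : 0 <= n%:R * c by rewrite mulr_ge0 // ler0n.
have nA0 : 0 <= n%:R * A by rewrite mulr_ge0 // ler0n.
exists (2 + n%:R * c + n%:R * A); split; first by lra.
move=> a ha.
have a0 : 0 < a by lra.
pose M := Num.truncn (a * a).
exists [set E | exists T k z, netmx T k z /\ E = ellB T], #|{: ({ffun 'I_n -> 'I_M.+1} * {ffun 'I_n * 'I_n -> 'I_M.+1})%type}|,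
  (fun E => enum_rank (cdata M E)).
split; [|split].
- move=> E [T [k [z [hT ->]]]]; exists T; split => //; exact: net_unit hT.
- move=> K hK; have [gK [Mb HM] [r r0 Hr]] := body_props hK.
  have hg := greedy gK HM r0 Hr.
  have hg' : forall i : 'I_n, exists p : 'rV[R]_n * int,
      [/\ K p.1, (forall j : 'I_n, (i < j)%N -> p.1 0 j = 0), p.1 0 i = expR p.2%:~R &
      forall y : 'rV[R]_n, K y -> (forall j : 'I_n, (i < j)%N -> y 0 j = 0) ->
        `|y 0 i| <= 2 * expR 1 * expR p.2%:~R].
    by move=> i; have [v [k h]] := hg i; exists (v, k).
  have [f hf] := choice hg'.
  pose k i := (f i).2.
  have [T [z [zd HT]]] := construct (d := fun i => expR (k i)%:~R) gK
     (fun i => let: And4 h _ _ _ := hf i in h)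
     (fun i => let: And4 _ h _ _ := hf i in h)
     (fun i => let: And4 _ _ h _ := hf i in h)
     (fun i => expR_gt0 _) (leqnn n).
  have hT : netmx T k z by split => // i j; have [h _] := HT i (ltn_ord i); apply: h.
  have Tc : forall i, dilate c K (row i T) by move=> i; have [_ h] := HT i (ltn_ord i).
  have [Ttri Td] := net_tri hT.
  exists (ellB T); first by exists T, k, z.
  split.
  + move=> _ [x Kx <-].
    have ys : forall j : 'I_n, (n <= j)%N -> x 0 j = 0.
      by move=> j; rewrite leqNgt ltn_ord.
    have [aa [aE ab]] := bound_rep gK G0 c0 (fun i => expR_gt0 _) Ttri Td Tc
      (fun i y Ky ys => let: And4 _ _ _ h := hf i in h y Ky ys)
      (leqnn n) ler01 (dil1 Kx) ys.
    exists (a^-1 *: aa); last by rewrite -scalemxAl -aE.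
    rewrite /Defs.unit_ball /=; apply: (sq_bound (t := A / a)) => //.
    * by apply: divr_ge0 => //; apply: ltW.
    * by rewrite mulrA ler_pdivrMr // mul1r; lra.
    * move=> j; rewrite mxE normrM normfV (gtr0_norm a0) [leRHS]mulrC.
      by rewrite ler_pM2l ?invr_gt0 //; have := ab j; rewrite mul1r.
  + move=> _ [x xu <-].
    have := dil_comb (b := 1) gK ler01 c0 (sq_le1 xu) (fun j _ => Tc j).
    apply: dil_mono gK _ _; first by rewrite mul1r.
    by rewrite mul1r; lra.
- move=> K E1 E2 hK h1 h2 hcol s1 s2.
  have hd : cdata M E1 = cdata M E2 := enum_rank_inj hcol.
  have [n1 e1] := repTP h1; have [n2 e2] := repTP h2.
  move: hd; rewrite /cdata.
  move: (repT E1) (repT E2) n1 n2 e1 e2 => [[T1 k1] z1] [[T2 k2] z2] /= n1 n2 e1 e2 hd.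
  case: hd => hk hz.
  rewrite e1 e2 in s1 s2 *.
  have [C1 [C1E C1b]] := sand_C a0 s1 s2.
  have [C2 [C2E C2b]] := sand_C a0 s2 s1.
  have mb : a * a < (M.+1)%:R := truncnS_gt _.
  congr ellB; apply: (net_sep n1 n2 mb _ _ C1E C2E C1b C2b).
    by move=> i; have := congr1 (fun g : {ffun 'I_n -> 'I_M.+1} => g i) hk; rewrite !ffunE => /res_dvd.
  by move=> i j; have := congr1 (fun g : {ffun 'I_n * 'I_n -> 'I_M.+1} => g (i, j)) hz; rewrite !ffunE => /res_dvd.
Qed.
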